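(* Fix $n\in\mathbb N$. Let $\mathfrak M\models\mathrm{I}\Delta_0$ and $a\in M$. Then: (1) $a+1\in\Sigma_n\text{-}\mathrm{Card}^{\mathfrak M}(a)$ if and only if $\Sigma_n\text{-}\mathrm{Card}^{\mathfrak M}(a)$ is closed under $x\mapsto x+1$; (2) $2a\in\Sigma_n\text{-}\mathrm{Card}^{\mathfrak M}(a)$ if and only if $\Sigma_n\text{-}\mathrm{Card}^{\mathfrak M}(a)$ is closed under $x\mapsto2x$; (3) $a^2\in\Sigma_n\text{-}\mathrm{Card}^{\mathfrak M}(a)$ if and only if $\Sigma_n\text{-}\mathrm{Card}^{\mathfrak M}(a)$ is closed under $x\mapsto x^2$.
   Context: $\mathrm{I}\Delta_0$ is first-order arithmetic with induction for bounded formulas. Numbers $x$ are identified with $\{v:v<x\}$. For $\mathfrak M\models\mathrm{I}\Delta_0$ and $a\in M$, $\Sigma_n\text{-}\mathrm{Card}^{\mathfrak M}(a)=\{b\in M:$ in $\mathfrak M$ there is an injection from $b$ into $a$ whose graph is definable by a $\Sigma_n$ formula with parameters$\}$. *)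

(* Defs.v *)
Inductive term : Type :=
  | tvar : nat -> term
  | tzero : term
  | tone : term
  | tplus : term -> term -> term
  | ttimes : term -> term -> term.

(* Variables are de Bruijn indices: a quantifier binds index 0.
   In the bounded quantifiers [fball t phi] / [fbex t phi] the bound term
   [t] lives in the OUTER scope (it is not affected by the binder). *)
Inductive formula : Type :=
  | feq : term -> term -> formula
  | flt : term -> term -> formula
  | fnot : formula -> formula
  | fand : formula -> formula -> formula
  | for_ : formula -> formula -> formula
  | fimp : formula -> formula -> formula
  | fall : formula -> formula
  | fex : formula -> formula
  | fball : term -> formula -> formula
  | fbex : term -> formula -> formula.

Record structure : Type := Structure {
  carrier :> Type;
  s_zero : carrier;
  s_one : carrier;
  s_add : carrier -> carrier -> carrier;
  s_mul : carrier -> carrier -> carrier;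
  s_lt : carrier -> carrier -> Prop }.

Definition scons {M : Type} (x : M) (e : nat -> M) : nat -> M :=
  fun i => match i with 0 => x | S j => e j end.

Fixpoint eval (M : structure) (e : nat -> M) (t : term) : M :=
  match t with
  | tvar i => e i
  | tzero => s_zero M
  | tone => s_one M
  | tplus t1 t2 => s_add M (eval M e t1) (eval M e t2)
  | ttimes t1 t2 => s_mul M (eval M e t1) (eval M e t2)
  end.

Fixpoint sat (M : structure) (e : nat -> M) (phi : formula) : Prop :=
  match phi with
  | feq t1 t2 => eval M e t1 = eval M e t2
  | flt t1 t2 => s_lt M (eval M e t1) (eval M e t2)
  | fnot p => ~ sat M e p
  | fand p q => sat M e p /\ sat M e q
  | for_ p q => sat M e p \/ sat M e q
  | fimp p q => sat M e p -> sat M e q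
  | fall p => forall x : M, sat M (scons x e) p
  | fex p => exists x : M, sat M (scons x e) p
  | fball t p => forall x : M, s_lt M x (eval M e t) -> sat M (scons x e) p
  | fbex t p => exists x : M, s_lt M x (eval M e t) /\ sat M (scons x e) p
  end.

Inductive IsDelta0 : formula -> Prop :=
  | d0_eq t1 t2 : IsDelta0 (feq t1 t2)
  | d0_lt t1 t2 : IsDelta0 (flt t1 t2)
  | d0_not p : IsDelta0 p -> IsDelta0 (fnot p)
  | d0_and p q : IsDelta0 p -> IsDelta0 q -> IsDelta0 (fand p q)
  | d0_or p q : IsDelta0 p -> IsDelta0 q -> IsDelta0 (for_ p q)
  | d0_imp p q : IsDelta0 p -> IsDelta0 q -> IsDelta0 (fimp p q)
  | d0_ball t p : IsDelta0 p -> IsDelta0 (fball t p)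
  | d0_bex t p : IsDelta0 p -> IsDelta0 (fbex t p).

Inductive ExBlock (P : formula -> Prop) : formula -> Prop :=
  | eb_base p : P p -> ExBlock P p
  | eb_ex p : ExBlock P p -> ExBlock P (fex p).

Inductive AllBlock (P : formula -> Prop) : formula -> Prop :=
  | ab_base p : P p -> AllBlock P p
  | ab_all p : AllBlock P p -> AllBlock P (fall p).

Fixpoint IsSigma (n : nat) : formula -> Prop :=
  match n with
  | 0 => IsDelta0
  | S m => ExBlock (IsPi m)
  end
with IsPi (n : nat) : formula -> Prop :=
  match n with
  | 0 => IsDelta0
  | S m => AllBlock (IsSigma m)
  end.

(** * Models of I Delta_0 : PA^- (Kaye's axioms) + Delta_0 induction *)
Definition PAminus (M : structure) : Prop :=
  let O := s_zero M in let I := s_one M in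
  let add := s_add M in let mul := s_mul M in let lt := s_lt M in
  (forall x y z, add (add x y) z = add x (add y z)) /\
  (forall x y, add x y = add y x) /\
  (forall x y z, mul (mul x y) z = mul x (mul y z)) /\
  (forall x y, mul x y = mul y x) /\
  (forall x y z, mul x (add y z) = add (mul x y) (mul x z)) /\
  (forall x, add x O = x /\ mul x O = O) /\
  (forall x, mul x I = x) /\
  (forall x, ~ lt x x) /\
  (forall x y z, lt x y -> lt y z -> lt x z) /\
  (forall x y, lt x y \/ x = y \/ lt y x) /\
  (forall x y z, lt x y -> lt (add x z) (add y z)) /\
  (forall x y z, lt O z -> lt x y -> lt (mul x z) (mul y z)) /\
  (forall x y, lt x y -> exists z, add x z = y) /\
  (lt O I /\ forall x, lt O x -> (I = x \/ lt I x)) /\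
  (forall x, O = x \/ lt O x).

(* induction for Delta_0 formulas with parameters: the induction variable is
   de Bruijn index 0, the parameters are given by the environment e *)
Definition Delta0Induction (M : structure) : Prop :=
  forall (phi : formula), IsDelta0 phi -> forall (e : nat -> M),
    sat M (scons (s_zero M) e) phi ->
    (forall x : M, sat M (scons x e) phi -> sat M (scons (s_add M x (s_one M)) e) phi) ->
    forall x : M, sat M (scons x e) phi.

Definition IDelta0Model (M : structure) : Prop := PAminus M /\ Delta0Induction M.

(* [b \in Sigma_n-Card(a)]: there is a Sigma_n formula phi(u, v, params)
   (u = index 0, v = index 1, parameters from the environment e) whose
   defined relation is exactly the graph of an injection from
   b = {u : u < b} into a = {v : v < a}. *)
Definition SigmaCard (n : nat) (M : structure) (a b : M) : Prop :=
  exists (phi : formula) (e : nat -> M),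
    IsSigma n phi /\
    let R := fun u v : M => sat M (scons u (scons v e)) phi in
    (forall u v, R u v -> s_lt M u b /\ s_lt M v a) /\
    (forall u, s_lt M u b -> exists v, R u v) /\
    (forall u v v', R u v -> R u v' -> v = v') /\
    (forall u u' v, R u v -> R u' v -> u = u').

(* Main.v *)
Require Import Defs.
From Stdlib Require Import Setoid Morphisms Classical Arith Lia.

Fixpoint trename (r : nat -> nat) (t : term) : term :=
  match t with
  | tvar i => tvar (r i)
  | tzero => tzero | tone => tone
  | tplus a b => tplus (trename r a) (trename r b)
  | ttimes a b => ttimes (trename r a) (trename r b)
  end.

Definition up (r : nat -> nat) : nat -> nat :=
  fun i => match i with 0 => 0 | S k => S (r k) end.

Fixpoint frename (r : nat -> nat) (p : formula) : formula :=
  match p with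
  | feq a b => feq (trename r a) (trename r b)
  | flt a b => flt (trename r a) (trename r b)
  | fnot p => fnot (frename r p)
  | fand p q => fand (frename r p) (frename r q)
  | for_ p q => for_ (frename r p) (frename r q)
  | fimp p q => fimp (frename r p) (frename r q)
  | fall p => fall (frename (up r) p)
  | fex p => fex (frename (up r) p)
  | fball t p => fball (trename r t) (frename (up r) p)
  | fbex t p => fbex (trename r t) (frename (up r) p)
  end.

Lemma eval_ext M e e' t : (forall i, e i = e' i) -> eval M e t = eval M e' t.
Proof. intros H; induction t; simpl; try rewrite IHt1, IHt2; auto. Qed.

Lemma scons_ext {M : Type} (x : M) e e' :
  (forall i, e i = e' i) -> forall i, scons x e i = scons x e' i.
Proof. intros H [|i]; simpl; auto. Qed.

Lemma sat_ext M p : forall e e', (forall i, e i = e' i) -> (sat M e p <-> sat M e' p).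
Proof.
  induction p; intros e e' H; simpl.
  - rewrite (eval_ext M e e' t H), (eval_ext M e e' t0 H); tauto.
  - rewrite (eval_ext M e e' t H), (eval_ext M e e' t0 H); tauto.
  - rewrite (IHp e e' H); tauto.
  - rewrite (IHp1 e e' H), (IHp2 e e' H); tauto.
  - rewrite (IHp1 e e' H), (IHp2 e e' H); tauto.
  - rewrite (IHp1 e e' H), (IHp2 e e' H); tauto.
  - split; intros H1 x; [apply (proj1 (IHp _ _ (scons_ext x e e' H)))
                        | apply (proj2 (IHp _ _ (scons_ext x e e' H)))]; apply H1.
  - split; intros [x H1]; exists x; [apply (proj1 (IHp _ _ (scons_ext x e e' H)))
                        | apply (proj2 (IHp _ _ (scons_ext x e e' H)))]; apply H1.
  - rewrite (eval_ext M e e' t H).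
    split; intros H1 x Hx; [apply (proj1 (IHp _ _ (scons_ext x e e' H)))
                        | apply (proj2 (IHp _ _ (scons_ext x e e' H)))]; apply H1, Hx.
  - rewrite (eval_ext M e e' t H).
    split; intros [x [Hx H1]]; exists x; split; auto;
      [apply (proj1 (IHp _ _ (scons_ext x e e' H)))
      | apply (proj2 (IHp _ _ (scons_ext x e e' H)))]; apply H1.
Qed.

Lemma eval_rename M r t : forall e, eval M e (trename r t) = eval M (fun i => e (r i)) t.
Proof. induction t; intros e; simpl; try rewrite IHt1, IHt2; auto. Qed.

Lemma sat_rename M p : forall e r, sat M e (frename r p) <-> sat M (fun i => e (r i)) p.
Proof.
  induction p; intros e r; simpl; try rewrite !eval_rename;
    try rewrite IHp; try rewrite IHp1, IHp2; try tauto.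
  all: try (assert (K : forall x, sat M (scons x e) (frename (up r) p) <->
                             sat M (scons x (fun i => e (r i))) p)
       by (intro x; rewrite IHp; apply sat_ext; intros [|i]; reflexivity)).
  - split; intros H1 x; apply K; apply H1.
  - split; intros [x H1]; exists x; apply K; apply H1.
  - split; intros H1 x Hx; apply K; apply H1, Hx.
  - split; intros [x [Hx H1]]; exists x; split; auto; apply K; apply H1.
Qed.

Lemma sat_shift M x e p : sat M (scons x e) (frename S p) <-> sat M e p.
Proof. rewrite sat_rename; reflexivity. Qed.

Lemma delta0_rename p : IsDelta0 p -> forall r, IsDelta0 (frename r p).
Proof. induction 1; intros r; simpl; constructor; auto. Qed.

Lemma sigma_pi_rename n :
  (forall p, IsSigma n p -> forall r, IsSigma n (frename r p)) /\
  (forall p, IsPi n p -> forall r, IsPi n (frename r p)).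
Proof.
  induction n as [|m [IHs IHp]]; simpl.
  - split; intros; apply delta0_rename; auto.
  - split.
    + intros p H; induction H; intros r; simpl.
      * apply eb_base; auto.
      * apply eb_ex; auto.
    + intros p H; induction H; intros r; simpl.
      * apply ab_base; auto.
      * apply ab_all; auto.
Qed.

Lemma d0_sigma_pi n : forall p, IsDelta0 p -> IsSigma n p /\ IsPi n p.
Proof.
  induction n; intros p H; simpl; [tauto|].
  split; constructor; [apply (proj2 (IHn p H)) | apply (proj1 (IHn p H))].
Qed.

Section Binop.
Variable M : structure.
Variable op : formula -> formula -> formula.
Variable bop : Prop -> Prop -> Prop.
Hypothesis Hsat : forall e p q, sat M e (op p q) <-> bop (sat M e p) (sat M e q).
Hypothesis Hd0 : forall p q, IsDelta0 p -> IsDelta0 q -> IsDelta0 (op p q).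
Hypothesis Hiff : forall A A' B B', (A <-> A') -> (B <-> B') -> (bop A B <-> bop A' B').
Hypothesis Hexl : forall (P : M -> Prop) B, bop (exists x, P x) B <-> exists x, bop (P x) B.
Hypothesis Hexr : forall A (P : M -> Prop), bop A (exists x, P x) <-> exists x, bop A (P x).
Hypothesis Halll : forall (P : M -> Prop) B, bop (forall x, P x) B <-> forall x, bop (P x) B.
Hypothesis Hallr : forall A (P : M -> Prop), bop A (forall x, P x) <-> forall x, bop A (P x).

Definition closedS n := forall p q, IsSigma n p -> IsSigma n q ->
  exists c, IsSigma n c /\ forall e, sat M e c <-> bop (sat M e p) (sat M e q).
Definition closedP n := forall p q, IsPi n p -> IsPi n q ->
  exists c, IsPi n c /\ forall e, sat M e c <-> bop (sat M e p) (sat M e q).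

Lemma binop_closed n : closedS n /\ closedP n.
Proof.
  induction n as [|m [IHs IHp]].
  - split; intros p q Hp Hq; exists (op p q); simpl in *;
      (split; [apply Hd0; assumption | intro e; apply Hsat]).
  - destruct (sigma_pi_rename m) as [RS RP].
    destruct (sigma_pi_rename (S m)) as [RS1 RP1].
    split.
    + assert (Inner : forall q, ExBlock (IsPi m) q -> forall p, IsPi m p ->
         exists c, ExBlock (IsPi m) c /\ forall e, sat M e c <-> bop (sat M e p) (sat M e q)).
      { intros q Hq; induction Hq as [q Hq | q Hq IH]; intros p Hp.
        - destruct (IHp p q Hp Hq) as [c [Hc Hce]].
          exists c; split; [apply eb_base; exact Hc | exact Hce].
        - destruct (IH (frename S p) (RP p Hp S)) as [c [Hc Hce]].
          exists (fex c); split; [apply eb_ex; exact Hc|].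
          intro e; simpl. rewrite Hexr. split; intros [x Hx]; exists x.
          + apply Hce in Hx.
            exact (proj1 (Hiff _ _ _ _ (sat_shift M x e p) (iff_refl _)) Hx).
          + apply Hce.
            exact (proj2 (Hiff _ _ _ _ (sat_shift M x e p) (iff_refl _)) Hx). }
      intros p q Hp Hq. simpl in Hp, Hq |- *. revert q Hq.
      induction Hp as [p Hp | p Hp IH]; intros q Hq.
      * exact (Inner q Hq p Hp).
      * destruct (IH (frename S q) (RS1 q Hq S)) as [c [Hc Hce]].
        exists (fex c); split; [apply eb_ex; exact Hc|].
        intro e; simpl. rewrite Hexl. split; intros [x Hx]; exists x.
        -- apply Hce in Hx.
           exact (proj1 (Hiff _ _ _ _ (iff_refl _) (sat_shift M x e q)) Hx).
        -- apply Hce.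
           exact (proj2 (Hiff _ _ _ _ (iff_refl _) (sat_shift M x e q)) Hx).
    + assert (Inner : forall q, AllBlock (IsSigma m) q -> forall p, IsSigma m p ->
         exists c, AllBlock (IsSigma m) c /\ forall e, sat M e c <-> bop (sat M e p) (sat M e q)).
      { intros q Hq; induction Hq as [q Hq | q Hq IH]; intros p Hp.
        - destruct (IHs p q Hp Hq) as [c [Hc Hce]].
          exists c; split; [apply ab_base; exact Hc | exact Hce].
        - destruct (IH (frename S p) (RS p Hp S)) as [c [Hc Hce]].
          exists (fall c); split; [apply ab_all; exact Hc|].
          intro e; simpl. rewrite Hallr. split; intros Hx x; specialize (Hx x).
          + apply Hce in Hx.
            exact (proj1 (Hiff _ _ _ _ (sat_shift M x e p) (iff_refl _)) Hx).
          + apply Hce.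
            exact (proj2 (Hiff _ _ _ _ (sat_shift M x e p) (iff_refl _)) Hx). }
      intros p q Hp Hq. simpl in Hp, Hq |- *. revert q Hq.
      induction Hp as [p Hp | p Hp IH]; intros q Hq.
      * exact (Inner q Hq p Hp).
      * destruct (IH (frename S q) (RP1 q Hq S)) as [c [Hc Hce]].
        exists (fall c); split; [apply ab_all; exact Hc|].
        intro e; simpl. rewrite Halll. split; intros Hx x; specialize (Hx x).
        -- apply Hce in Hx.
           exact (proj1 (Hiff _ _ _ _ (iff_refl _) (sat_shift M x e q)) Hx).
        -- apply Hce.
           exact (proj2 (Hiff _ _ _ _ (iff_refl _) (sat_shift M x e q)) Hx).
Qed.
End Binop.
Lemma and_closed M n : closedS M and n.
Proof.
  refine (proj1 (binop_closed M fand and _ _ _ _ _ _ _ n)).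
  - intros; simpl; tauto.
  - intros; constructor; assumption.
  - intros A A' B B' H1 H2; tauto.
  - intros P B; split; [intros [[x Hx] HB]; exists x; tauto | intros [x [Hx HB]]; split; [exists x|]; assumption].
  - intros A P; split; [intros [HA [x Hx]]; exists x; tauto | intros [x [HA Hx]]; split; [|exists x]; assumption].
  - intros P B; split; [intros [HP HB] x; split; auto | intros H; split; [intros x; apply H | apply (H (s_zero M))]].
  - intros A P; split; [intros [HA HP] x; split; auto | intros H; split; [apply (H (s_zero M)) | intros x; apply H]].
Qed.

Lemma or_closed M n : closedS M or n.
Proof.
  refine (proj1 (binop_closed M for_ or _ _ _ _ _ _ _ n)).
  - intros; simpl; tauto.
  - intros; constructor; assumption.
  - intros A A' B B' H1 H2; tauto.
  - intros P B; split.
    + intros [[x Hx]|HB]; [exists x; left; exact Hx | exists (s_zero M); right; exact HB].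
    + intros [x [Hx|HB]]; [left; exists x; exact Hx | right; exact HB].
  - intros A P; split.
    + intros [HA|[x Hx]]; [exists (s_zero M); left; exact HA | exists x; right; exact Hx].
    + intros [x [HA|Hx]]; [left; exact HA | right; exists x; exact Hx].
  - intros P B; split.
    + intros [HP|HB] x; [left; apply HP | right; exact HB].
    + intros H. destruct (classic B) as [HB|HB]; [right; exact HB|left].
      intros x; destruct (H x); [assumption | contradiction].
  - intros A P; split.
    + intros [HA|HP] x; [left; exact HA | right; apply HP].
    + intros H. destruct (classic A) as [HA|HA]; [left; exact HA|right].
      intros x; destruct (H x); [contradiction | assumption].
Qed.

Definition Def n (M : structure) (P : (nat -> M) -> Prop) : Prop :=
  exists p, IsSigma n p /\ forall e, sat M e p <-> P e.

Lemma Def_ext n (M : structure) (P Q : (nat -> M) -> Prop) : Def n M P -> (forall e, P e <-> Q e) -> Def n M Q.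
Proof. intros [p [Hp HP]] H; exists p; split; auto; intro e; rewrite HP; apply H. Qed.

Lemma Def_and n (M : structure) (P Q : (nat -> M) -> Prop) : Def n M P -> Def n M Q -> Def n M (fun e => P e /\ Q e).
Proof.
  intros [p [Hp HP]] [q [Hq HQ]].
  destruct (and_closed M n p q Hp Hq) as [c [Hc Hce]].
  exists c; split; [exact Hc|]. intro e. rewrite Hce, HP, HQ. tauto.
Qed.

Lemma Def_or n (M : structure) (P Q : (nat -> M) -> Prop) : Def n M P -> Def n M Q -> Def n M (fun e => P e \/ Q e).
Proof.
  intros [p [Hp HP]] [q [Hq HQ]].
  destruct (or_closed M n p q Hp Hq) as [c [Hc Hce]].
  exists c; split; [exact Hc|]. intro e. rewrite Hce, HP, HQ. tauto.
Qed.

Lemma Def_sat n (M : structure) p : IsSigma n p -> Def n M (fun e => sat M e p).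
Proof. intros H; exists p; split; [exact H | intro e; reflexivity]. Qed.

Lemma Def_d0 n M p : IsDelta0 p -> Def n M (fun e => sat M e p).
Proof. intros H; apply Def_sat, (proj1 (d0_sigma_pi n p H)). Qed.

Lemma Def_rename n (M : structure) (P : (nat -> M) -> Prop) r : Def n M P -> Def n M (fun e => P (fun i => e (r i))).
Proof.
  intros [p [Hp HP]]. exists (frename r p); split.
  - apply (proj1 (sigma_pi_rename n)); exact Hp.
  - intro e; rewrite sat_rename; apply HP.
Qed.

Lemma Def_bex n (M : structure) (P : (nat -> M) -> Prop) t :
  Def n M P -> Def n M (fun e => exists w, s_lt M w (eval M e t) /\ P (scons w e)).
Proof.
  intros HD. destruct n as [|m].
  - destruct HD as [p [Hp HP]]. exists (fbex t p); split; [constructor; exact Hp|].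
    intro e; simpl. split; intros [w [Hw H]]; exists w; split; try assumption; apply HP; assumption.
  - assert (HD2 : Def (S m) M (fun e => s_lt M (e 0) (eval M e (trename S t)) /\ P e)).
    { apply Def_and; [|exact HD].
      exact (Def_d0 (S m) M (flt (tvar 0) (trename S t)) (d0_lt _ _)). }
    destruct HD2 as [c [Hc Hce]].
    exists (fex c); split; [simpl; apply eb_ex; exact Hc|].
    intro e; simpl.
    assert (Ht : forall w, eval M (scons w e) (trename S t) = eval M e t)
      by (intro w; rewrite eval_rename; reflexivity).
    split; intros [w H]; exists w.
    + apply Hce in H; cbv beta in H; rewrite Ht in H; exact H.
    + apply Hce; cbv beta; rewrite Ht; exact H.
Qed.

Lemma mk_card n (M : structure) a b (P : (nat -> M) -> Prop) (E : nat -> M) (Rel : M -> M -> Prop) :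
  Def n M P -> (forall u v, P (scons u (scons v E)) <-> Rel u v) ->
  (forall u v, Rel u v -> s_lt M u b /\ s_lt M v a) ->
  (forall u, s_lt M u b -> exists v, Rel u v) ->
  (forall u v v', Rel u v -> Rel u v' -> v = v') ->
  (forall u u' v, Rel u v -> Rel u' v -> u = u') ->
  SigmaCard n M a b.
Proof.
  intros [p [Hp HP]] HR H1 H2 H3 H4.
  exists p, E. split; [exact Hp|]. cbv zeta.
  split; [|split; [|split]].
  - intros u v H. apply H1. apply (proj1 (HR u v)). apply (proj1 (HP _)). exact H.
  - intros u Hu. destruct (H2 u Hu) as [v Hv]. exists v.
    apply (proj2 (HP _)). apply (proj2 (HR u v)). exact Hv.
  - intros u v v' Hv Hv'. apply (H3 u).
    + apply (proj1 (HR u v)). apply (proj1 (HP _)). exact Hv.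
    + apply (proj1 (HR u v')). apply (proj1 (HP _)). exact Hv'.
  - intros u u' v Hv Hv'. apply (H4 u u' v).
    + apply (proj1 (HR u v)). apply (proj1 (HP _)). exact Hv.
    + apply (proj1 (HR u' v)). apply (proj1 (HP _)). exact Hv'.
Qed.

Definition rs (a b k : nat) : nat -> nat :=
  fun i => match i with 0 => a | 1 => b | S (S j) => k + j end.
Definition rm (a b k : nat) : nat -> nat :=
  fun i => match i with 0 => a | 1 => b | S (S j) => k + (j + j) end.

Lemma sat_rs (M : structure) (env : nat -> M) p a b k :
  sat M (fun i => env (rs a b k i)) p <->
  sat M (scons (env a) (scons (env b) (fun j => env (k + j)))) p.
Proof. apply sat_ext; intros [|[|j]]; reflexivity. Qed.

Lemma sat_rm (M : structure) (env : nat -> M) p a b k :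
  sat M (fun i => env (rm a b k i)) p <->
  sat M (scons (env a) (scons (env b) (fun j => env (k + (j + j))))) p.
Proof. apply sat_ext; intros [|[|j]]; reflexivity. Qed.

Fixpoint merge {M : Type} (e1 e2 : nat -> M) (i : nat) : M :=
  match i with
  | 0 => e1 0
  | 1 => e2 0
  | S (S j) => merge (fun k => e1 (S k)) (fun k => e2 (S k)) j
  end.

Lemma merge_even {M : Type} k : forall (e1 e2 : nat -> M), merge e1 e2 (k + k) = e1 k.
Proof.
  induction k; intros; [reflexivity|].
  replace (S k + S k) with (S (S (k + k))) by lia. exact (IHk (fun j => e1 (S j)) (fun j => e2 (S j))).
Qed.

Lemma merge_odd {M : Type} k : forall (e1 e2 : nat -> M), merge e1 e2 (S (k + k)) = e2 k.
Proof.
  induction k; intros; [reflexivity|].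
  replace (S (S k + S k)) with (S (S (S (k + k)))) by lia. exact (IHk (fun j => e1 (S j)) (fun j => e2 (S j))).
Qed.

Lemma card_trans n M a c b : SigmaCard n M a c -> SigmaCard n M c b -> SigmaCard n M a b.
Proof.
  intros [pf [ef [Hf HF]]] [ph [eh [Hh HH]]]. cbv zeta in HF, HH.
  destruct HF as (F1 & F2 & F3 & F4). destruct HH as (H1 & H2 & H3 & H4).
  pose proof (Def_bex n M _ (tvar 2) (Def_and n M _ _
     (Def_rename n M _ (rm 1 0 5) (Def_sat n M ph Hh))
     (Def_rename n M _ (rm 0 2 4) (Def_sat n M pf Hf)))) as D.
  apply (mk_card n M a b _ (scons c (merge ef eh))
     (fun u v => exists w, s_lt M w c /\ sat M (scons u (scons w eh)) ph /\
                           sat M (scons w (scons v ef)) pf) D).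
  - intros u v. cbv beta. setoid_rewrite sat_rm.
    split; intros [w [Hw [X Y]]]; exists w; (split; [exact Hw|split]).
    all: (eapply sat_ext; [|eassumption]; intros [|[|j]]; [reflexivity|reflexivity|];
          first [exact (eq_sym (merge_odd j ef eh)) | exact (merge_odd j ef eh)
                | exact (eq_sym (merge_even j ef eh)) | exact (merge_even j ef eh)]).
  - intros u v [w [Hw [X Y]]]. split; [apply (H1 _ _ X) | apply (F1 _ _ Y)].
  - intros u Hu. destruct (H2 u Hu) as [w X]. destruct (H1 _ _ X) as [_ Hw].
    destruct (F2 w Hw) as [v Y]. exists v, w. auto.
  - intros u v v' [w [Hw [X Y]]] [w' [Hw' [X' Y']]].
    rewrite (H3 _ _ _ X X') in Y. exact (F3 _ _ _ Y Y').
  - intros u u' v [w [Hw [X Y]]] [w' [Hw' [X' Y']]].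
    rewrite (F4 _ _ _ Y Y') in X. exact (H4 _ _ _ X X').
Qed.

Lemma card_refl n (M : structure) (a : M) : SigmaCard n M a a.
Proof.
  pose proof (Def_d0 n M (fand (feq (tvar 0) (tvar 1)) (flt (tvar 0) (tvar 2)))
     (d0_and _ _ (d0_eq _ _) (d0_lt _ _))) as D.
  apply (mk_card n M a a _ (scons a (fun _ => a)) (fun u v => u = v /\ s_lt M u a) D).
  - intros u v; simpl; tauto.
  - intros u v [-> H]; auto.
  - intros u H; exists u; auto.
  - intros u v v' [-> _] [-> _]; reflexivity.
  - intros u u' v [-> _] [-> _]; reflexivity.
Qed.
Section PA.
Variable M : structure.
Hypothesis Hpa : PAminus M.
Local Notation "x + y" := (s_add M x y).
Local Notation "x * y" := (s_mul M x y).
Local Notation "x < y" := (s_lt M x y).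
Local Notation "0" := (s_zero M).
Local Notation "1" := (s_one M).

Ltac pa := let H' := fresh in pose proof Hpa as H'; unfold PAminus in H'; cbv zeta in H';
  destruct H' as (addA&addC&mulA&mulC&distr&zero&mul1&irr&trans&trich&ltadd&ltmul&ltdiff&one&zle).

Lemma addA x y z : x + y + z = x + (y + z). Proof. pa; auto. Qed.
Lemma addC x y : x + y = y + x. Proof. pa; auto. Qed.
Lemma mulC x y : x * y = y * x. Proof. pa; auto. Qed.
Lemma distr x y z : x * (y + z) = x * y + x * z. Proof. pa; auto. Qed.
Lemma add0 x : x + 0 = x. Proof. pa; apply zero. Qed.
Lemma mul0 x : x * 0 = 0. Proof. pa; apply zero. Qed.
Lemma mul1 x : x * 1 = x. Proof. pa; auto. Qed.
Lemma irr x : ~ x < x. Proof. pa; auto. Qed.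
Lemma ltr x y z : x < y -> y < z -> x < z. Proof. pa; eauto. Qed.
Lemma trich x y : x < y \/ x = y \/ y < x. Proof. pa; auto. Qed.
Lemma ltadd x y z : x < y -> x + z < y + z. Proof. pa; auto. Qed.
Lemma ltmul x y z : 0 < z -> x < y -> x * z < y * z. Proof. pa; auto. Qed.
Lemma ltdiff x y : x < y -> exists z, x + z = y. Proof. pa; auto. Qed.
Lemma lt01 : 0 < 1. Proof. pa; apply one. Qed.
Lemma pos1 x : 0 < x -> 1 = x \/ 1 < x. Proof. pa; apply one. Qed.
Lemma zle x : 0 = x \/ 0 < x. Proof. pa; auto. Qed.

Definition le x y := x < y \/ x = y.

Lemma add0l x : 0 + x = x. Proof. rewrite addC; apply add0. Qed.
Lemma ltaddl x y z : x < y -> z + x < z + y.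
Proof. intros H; rewrite (addC z x), (addC z y); apply ltadd, H. Qed.
Lemma add_cancel_r x y z : x + z = y + z -> x = y.
Proof.
  intros H; destruct (trich x y) as [h|[h|h]]; auto;
  apply (ltadd _ _ z) in h; rewrite H in h; exfalso; apply (irr _ h).
Qed.
Lemma add_cancel_l x y z : z + x = z + y -> x = y.
Proof. rewrite (addC z x), (addC z y); apply add_cancel_r. Qed.
Lemma lt_cancel_r x y z : x + z < y + z -> x < y.
Proof.
  intros H; destruct (trich x y) as [h|[h|h]]; auto; exfalso.
  - subst; apply (irr _ H).
  - apply (ltadd _ _ z) in h; apply (irr _ (ltr _ _ _ H h)).
Qed.
Lemma lt_cancel_l x y z : z + x < z + y -> x < y.
Proof. rewrite (addC z x), (addC z y); apply lt_cancel_r. Qed.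
Lemma not_lt0 x : ~ x < 0.
Proof. intros H; destruct (zle x) as [<-|h]; [apply (irr _ H) | apply (irr _ (ltr _ _ _ H h))]. Qed.
Lemma le_add x z : le x (x + z).
Proof.
  destruct (zle z) as [<-|h]; [right; rewrite add0; auto|left].
  rewrite <- (add0 x) at 1. apply ltaddl, h.
Qed.
Lemma not_lt_add x z : ~ x + z < x.
Proof. intros H; destruct (le_add x z) as [h|h]; [apply (irr _ (ltr _ _ _ H h)) | rewrite <- h in H; apply (irr _ H)]. Qed.
Lemma lt_le_tr x y z : x < y -> le y z -> x < z.
Proof. intros H [h| <-]; [apply (ltr _ _ _ H h) | exact H]. Qed.
Lemma le_lt_tr x y z : le x y -> y < z -> x < z.
Proof. intros [h| ->] H; [apply (ltr _ _ _ h H) | exact H]. Qed.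
Lemma le_tr x y z : le x y -> le y z -> le x z.
Proof. intros [h| ->] H; [left; apply (lt_le_tr _ _ _ h H) | exact H]. Qed.
Lemma lt_succ x : x < x + 1.
Proof. rewrite <- (add0 x) at 1; apply ltaddl, lt01. Qed.
Lemma lt_le_succ x y : x < y -> le (x + 1) y.
Proof.
  intros H; destruct (ltdiff _ _ H) as [z <-].
  destruct (zle z) as [<-|h]; [rewrite add0 in H; exfalso; apply (irr _ H)|].
  destruct (pos1 _ h) as [<-|h1]; [right; reflexivity | left; apply ltaddl, h1].
Qed.
Lemma lt_succ_inv u x : u < x + 1 -> u < x \/ u = x.
Proof.
  intros H; destruct (trich u x) as [h|[h|h]]; auto; exfalso.
  apply lt_le_succ in h. apply (irr _ (lt_le_tr _ _ _ H h)).
Qed.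
Lemma lt_plus_r x y z : x < y -> x < y + z.
Proof. intros H; apply (lt_le_tr _ _ _ H (le_add y z)). Qed.
Lemma le_diff x u : le x u -> exists z, x + z = u.
Proof. intros [h| <-]; [apply ltdiff, h | exists 0; apply add0]. Qed.
Lemma mul_le_r x y z : le x y -> le (x * z) (y * z).
Proof.
  intros [h| <-]; [|right; reflexivity].
  destruct (zle z) as [<-|hz]; [right; rewrite !mul0; reflexivity | left; apply ltmul; auto].
Qed.
Lemma mul0l x : 0 * x = 0. Proof. rewrite mulC; apply mul0. Qed.
Lemma mulSl x y : (x + 1) * y = x * y + y.
Proof. rewrite mulC, distr, mul1, (mulC y x); reflexivity. Qed.
Lemma two_mul y : (1 + 1) * y = y + y.
Proof. rewrite mulC, distr, mul1; reflexivity. Qed.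

Lemma sq_bound q r x : q < x -> r < x -> q * x + r < x * x.
Proof.
  intros Hq Hr. apply (ltaddl _ _ (q * x)) in Hr.
  rewrite <- mulSl in Hr. apply (lt_le_tr _ _ _ Hr). apply mul_le_r, lt_le_succ, Hq.
Qed.

Lemma div_unique d q r q' r' : r < d -> r' < d -> q * d + r = q' * d + r' -> q = q' /\ r = r'.
Proof.
  assert (K : forall q r q' r', r < d -> q < q' -> q * d + r < q' * d + r').
  { intros q1 r1 q2 r2 Hr Hq. apply (ltaddl _ _ (q1 * d)) in Hr. rewrite <- mulSl in Hr.
    apply (lt_le_tr _ _ _ Hr). apply (le_tr _ (q2 * d)); [apply mul_le_r, lt_le_succ, Hq | apply le_add]. }
  intros Hr Hr' E. destruct (trich q q') as [h|[h|h]].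
  - exfalso; pose proof (K _ r _ r' Hr h) as X; rewrite E in X; apply (irr _ X).
  - subst; split; auto; apply add_cancel_l in E; exact E.
  - exfalso; pose proof (K _ r' _ r Hr' h) as X; rewrite E in X; apply (irr _ X).
Qed.

End PA.
Section Cards.
Variable M : structure.
Hypothesis Hpa : PAminus M.
Hypothesis Hind : Delta0Induction M.
Local Notation "x + y" := (s_add M x y).
Local Notation "x * y" := (s_mul M x y).
Local Notation "x < y" := (s_lt M x y).
Local Notation "0" := (s_zero M).
Local Notation "1" := (s_one M).

Lemma div_exists x : 0 < x -> forall u, exists q r, r < x /\ u = q * x + r.
Proof.
  intros Hx u.
  set (phi := fbex (tplus (tvar 0) tone)
                (fbex (tvar 2) (feq (tvar 2) (tplus (ttimes (tvar 1) (tvar 3)) (tvar 0))))).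
  assert (Hd : IsDelta0 phi) by (repeat constructor).
  assert (K := Hind phi Hd (scons x (fun _ => x))).
  assert (Hu : sat M (scons u (scons x (fun _ => x))) phi).
  { apply K; simpl.
    - exists 0; split; [apply lt_succ; auto|]. exists 0; split; [exact Hx|].
      rewrite mul0l, add0; auto.
    - intros y [q [Hq [r [Hr E]]]].
      destruct (lt_le_succ M Hpa r x Hr) as [h|h].
      + exists q; split; [apply (ltr M Hpa _ _ _ Hq (lt_succ M Hpa _))|].
        exists (r + 1); split; [exact h|]. rewrite E, addA; auto.
      + exists (q + 1); split; [apply ltadd; auto|]. exists 0; split; [exact Hx|].
        rewrite add0, mulSl, E, addA, h; auto. }
  simpl in Hu. destruct Hu as [q [_ [r [Hr E]]]]. exists q, r; auto.
Qed.

Lemma card_succ n a x : SigmaCard n M a x -> SigmaCard n M (a + 1) (x + 1).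
Proof.
  intros [pg [eg [Hg HG]]]; cbv zeta in HG; destruct HG as (G1&G2&G3&G4).
  pose proof (Def_or n M _ _
    (Def_and n M _ _ (Def_d0 n M (flt (tvar 0) (tvar 2)) (d0_lt _ _))
                     (Def_rename n M _ (rs 0 1 4) (Def_sat n M pg Hg)))
    (Def_d0 n M (fand (feq (tvar 0) (tvar 2)) (feq (tvar 1) (tvar 3)))
                (d0_and _ _ (d0_eq _ _) (d0_eq _ _)))) as D.
  apply (mk_card n M (a + 1) (x + 1) _ (scons x (scons a eg))
    (fun u v => (u < x /\ sat M (scons u (scons v eg)) pg) \/ (u = x /\ v = a)) D).
  - intros u v; cbv beta; rewrite sat_rs.
    split; (intros [[A B]|[A B]]; [left|right]; split; assumption).
  - intros u v [[Hu X]|[-> ->]]; split.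
    + apply (ltr M Hpa _ _ _ Hu (lt_succ M Hpa _)).
    + apply (ltr M Hpa _ _ _ (proj2 (G1 _ _ X)) (lt_succ M Hpa _)).
    + apply lt_succ; auto.
    + apply lt_succ; auto.
  - intros u Hu; destruct (lt_succ_inv M Hpa _ _ Hu) as [h| ->].
    + destruct (G2 u h) as [v Hv]; exists v; left; auto.
    + exists a; right; auto.
  - intros u v v' [[Hu X]|[Hu ->]] [[Hu' X']|[Hu' ->]].
    + apply (G3 _ _ _ X X').
    + subst; exfalso; apply (irr M Hpa _ Hu).
    + subst; exfalso; apply (irr M Hpa _ Hu').
    + reflexivity.
  - intros u u' v [[Hu X]|[-> ->]] [[Hu' X']|[-> Hv]].
    + apply (G4 _ _ _ X X').
    + subst; exfalso; apply (irr M Hpa _ (proj2 (G1 _ _ X))).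
    + exfalso; apply (irr M Hpa _ (proj2 (G1 _ _ X'))).
    + reflexivity.
Qed.

Lemma card_double n a x : SigmaCard n M a x -> SigmaCard n M ((1 + 1) * a) ((1 + 1) * x).
Proof.
  intros [pg [eg [Hg HG]]]; cbv zeta in HG; destruct HG as (G1&G2&G3&G4).
  rewrite !(two_mul M Hpa).
  pose proof (Def_or n M _ _
    (Def_and n M _ _ (Def_d0 n M (flt (tvar 0) (tvar 2)) (d0_lt _ _))
                     (Def_rename n M _ (rs 0 1 4) (Def_sat n M pg Hg)))
    (Def_bex n M _ (tvar 2) (Def_bex n M _ (tvar 4) (Def_and n M _ _
       (Def_d0 n M (fand (feq (tvar 2) (tplus (tvar 4) (tvar 1)))
                         (feq (tvar 3) (tplus (tvar 5) (tvar 0))))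
               (d0_and _ _ (d0_eq _ _) (d0_eq _ _)))
       (Def_rename n M _ (rs 1 0 6) (Def_sat n M pg Hg)))))) as D.
  set (G := fun u v => sat M (scons u (scons v eg)) pg) in *.
  apply (mk_card n M (a + a) (x + x) _ (scons x (scons a eg))
    (fun u v => (u < x /\ G u v) \/
       (exists u', u' < x /\ exists v', v' < a /\ ((u = x + u' /\ v = a + v') /\ G u' v'))) D).
  - intros u v; cbv beta. setoid_rewrite sat_rs.
    split; (intros [[A B]|[u' [A [v' [B [C E]]]]]];
      [left; split; assumption
      | right; exists u'; split; [exact A|]; exists v'; split; [exact B|]; split; [exact C|exact E]]).
  - intros u v [[Hu X]|[u' [Hu [v' [Hv [[-> ->] X]]]]]]; split.
    + apply lt_plus_r; auto.
    + apply lt_plus_r; auto; apply (G1 _ _ X).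
    + apply ltaddl; auto.
    + apply ltaddl; auto.
  - intros u Hu. destruct (trich M Hpa u x) as [h|h].
    + destruct (G2 u h) as [v Hv]; exists v; left; auto.
    + assert (Hle : le M x u) by (destruct h as [->|h]; [right|left]; auto).
      destruct (le_diff M Hpa _ _ Hle) as [z Hz]. subst u.
      apply (lt_cancel_l M Hpa) in Hu.
      destruct (G2 z Hu) as [v' Hv']. exists (a + v'). right.
      exists z; split; [exact Hu|]. exists v'; split; [apply (G1 _ _ Hv')|]. auto.
  - intros u v v' [[Hu X]|[u1 [Hu1 [v1 [Hv1 [[E1 F1] X]]]]]] [[Hu' X']|[u2 [Hu2 [v2 [Hv2 [[E2 F2] X']]]]]].
    + apply (G3 _ _ _ X X').
    + exfalso; subst u; apply (not_lt_add M Hpa _ _ Hu).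
    + exfalso; subst u; apply (not_lt_add M Hpa _ _ Hu').
    + subst u; apply (add_cancel_l M Hpa) in E2; subst u2.
      subst v v'; rewrite (G3 _ _ _ X X'); reflexivity.
  - intros u u' v [[Hu X]|[u1 [Hu1 [v1 [Hv1 [[E1 F1] X]]]]]] [[Hu' X']|[u2 [Hu2 [v2 [Hv2 [[E2 F2] X']]]]]].
    + apply (G4 _ _ _ X X').
    + exfalso; subst v; apply (not_lt_add M Hpa _ _ (proj2 (G1 _ _ X))).
    + exfalso; subst v; apply (not_lt_add M Hpa _ _ (proj2 (G1 _ _ X'))).
    + subst v; apply (add_cancel_l M Hpa) in F2; subst v2.
      subst u u'; rewrite (G4 _ _ _ X X'); reflexivity.
Qed.

Lemma card_square n a x : SigmaCard n M a x -> SigmaCard n M (a * a) (x * x).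
Proof.
  intros [pg [eg [Hg HG]]]; cbv zeta in HG; destruct HG as (G1&G2&G3&G4).
  pose proof (Def_bex n M _ (tvar 2) (Def_bex n M _ (tvar 3) (Def_bex n M _ (tvar 5)
    (Def_bex n M _ (tvar 6) (Def_and n M _ _
       (Def_d0 n M (fand (feq (tvar 4) (tplus (ttimes (tvar 3) (tvar 6)) (tvar 2)))
                         (feq (tvar 5) (tplus (ttimes (tvar 1) (tvar 7)) (tvar 0))))
               (d0_and _ _ (d0_eq _ _) (d0_eq _ _)))
       (Def_and n M _ _ (Def_rename n M _ (rs 3 1 8) (Def_sat n M pg Hg))
                        (Def_rename n M _ (rs 2 0 8) (Def_sat n M pg Hg)))))))) as D.
  set (G := fun u v => sat M (scons u (scons v eg)) pg) in *.
  apply (mk_card n M (a * a) (x * x) _ (scons x (scons a eg))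
    (fun u v => exists q, q < x /\ exists r, r < x /\ exists s, s < a /\ exists t, t < a /\
        ((u = q * x + r /\ v = s * a + t) /\ (G q s /\ G r t))) D).
  - intros u v; cbv beta. setoid_rewrite sat_rs.
    split; (intros [q [Hq [r [Hr [s [Hs [t [Ht [C [E F]]]]]]]]]];
      exists q; split; [exact Hq|]; exists r; split; [exact Hr|];
      exists s; split; [exact Hs|]; exists t; split; [exact Ht|];
      split; [exact C|split; [exact E|exact F]]).
  - intros u v [q [Hq [r [Hr [s [Hs [t [Ht [[-> ->] _]]]]]]]]].
    split; apply sq_bound; auto.
  - intros u Hu. destruct (zle M Hpa x) as [<-|Hx].
    + exfalso; rewrite (mul0 M Hpa) in Hu; apply (not_lt0 M Hpa _ Hu).
    + destruct (div_exists x Hx u) as [q [r [Hr E]]].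
      assert (Hq : q < x).
      { destruct (trich M Hpa q x) as [h|h]; auto; exfalso.
        assert (Hle : le M x q) by (destruct h as [->|h]; [right|left]; auto).
        assert (L : le M (x * x) u).
        { rewrite E; apply (le_tr M Hpa _ (q * x)); [apply mul_le_r; auto | apply le_add; auto]. }
        apply (irr M Hpa _ (lt_le_tr M Hpa _ _ _ Hu L)). }
      destruct (G2 q Hq) as [s Hs]. destruct (G2 r Hr) as [t Ht].
      exists (s * a + t), q; split; [exact Hq|]; exists r; split; [exact Hr|].
      exists s; split; [apply (G1 _ _ Hs)|]; exists t; split; [apply (G1 _ _ Ht)|].
      auto.
  - intros u v v' [q [Hq [r [Hr [s [Hs [t [Ht [[E1 F1] [X Y]]]]]]]]]]
                  [q' [Hq' [r' [Hr' [s' [Hs' [t' [Ht' [[E2 F2] [X' Y']]]]]]]]]].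
    rewrite E1 in E2. destruct (div_unique M Hpa _ _ _ _ _ Hr Hr' E2) as [<- <-].
    subst v v'. rewrite (G3 _ _ _ X X'), (G3 _ _ _ Y Y'); reflexivity.
  - intros u u' v [q [Hq [r [Hr [s [Hs [t [Ht [[E1 F1] [X Y]]]]]]]]]]
                  [q' [Hq' [r' [Hr' [s' [Hs' [t' [Ht' [[E2 F2] [X' Y']]]]]]]]]].
    rewrite F1 in F2. destruct (div_unique M Hpa _ _ _ _ _ Ht Ht' F2) as [<- <-].
    subst u u'. rewrite (G4 _ _ _ X X'), (G4 _ _ _ Y Y'); reflexivity.
Qed.
End Cards.

Theorem proposition6p5 :
  forall (n : nat) (M : structure), IDelta0Model M -> forall a : M,
    (SigmaCard n M a (s_add M a (s_one M)) <->
       (forall x : M, SigmaCard n M a x -> SigmaCard n M a (s_add M x (s_one M)))) /\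
    (SigmaCard n M a (s_mul M (s_add M (s_one M) (s_one M)) a) <->
       (forall x : M, SigmaCard n M a x ->
          SigmaCard n M a (s_mul M (s_add M (s_one M) (s_one M)) x))) /\
    (SigmaCard n M a (s_mul M a a) <->
       (forall x : M, SigmaCard n M a x -> SigmaCard n M a (s_mul M x x))).
Proof.
  intros n M [Hpa Hind] a.
  split; [|split]; split.
  - intros H x Hx. apply (card_trans _ _ _ _ _ H). apply card_succ; auto.
  - intros H; apply H, card_refl.
  - intros H x Hx. apply (card_trans _ _ _ _ _ H). apply card_double; auto.
  - intros H; apply H, card_refl.
  - intros H x Hx. apply (card_trans _ _ _ _ _ H). apply card_square; auto.
  - intros H; apply H, card_refl.
Qed.
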